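(* Let $m>n>0$ be relatively prime integers. Define $f_1(m,n)=(2m-n,m)$, $f_2(m,n)=(2m+n,m)$, $f_3(m,n)=(2n+m,n)$ and $g_1(u,v)=(-v,u+2v)$, $g_2(u,v)=(v,u-2v)$, $g_3(u,v)=(u,v-2u)$. Then for each $i\in\{1,2,3\}$, except in the single case $(m,n)=(2,1)$ and $i=1$, one has $$\beta(f_i(m,n))=g_i(\beta(m,n)).$$
   Context: For relatively prime integers $a>b>0$, the Bézout coefficients $\beta(a,b)$ are defined via the Euclidean algorithm $a=q_1b+r_1$, $b=q_2r_1+r_2$, $\dots$, $r_{k-2}=q_kr_{k-1}+r_k$ with $r_{k-1}=1$, $r_k=0$ (where $r_{-1}=a$, $r_0=b$): writing $\begin{pmatrix}a\\ b\end{pmatrix}=M\begin{pmatrix}1\\0\end{pmatrix}$ with $M=\begin{pmatrix}q_1&1\\1&0\end{pmatrix}\cdots\begin{pmatrix}q_k&1\\1&0\end{pmatrix}$, $\beta(a,b)=(r,s)$ is the first row of $M^{-1}$, so $ra+sb=1$. (Note each $f_i(m,n)$ again consists of relatively prime integers with first entry larger than second, both positive.) *)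

(* Defs.v *)
From HB Require Import structures.
From mathcomp Require Import all_boot all_order all_algebra.
Set Implicit Arguments. Unset Strict Implicit. Unset Printing Implicit Defensive.
Import GRing.Theory Num.Theory.
Local Open Scope ring_scope.

(* Quotients q_1, ..., q_k of the Euclidean algorithm on (a, b):
   a = q_1 b + r_1, b = q_2 r_1 + r_2, ..., stopping when the remainder is 0.
   [fuel] bounds the number of steps; fuel >= b suffices since the second
   argument strictly decreases. *)
Fixpoint euclid_quots (fuel a b : nat) : seq nat :=
  match fuel with
  | 0 => [::]
  | fuel'.+1 => if b == 0%N then [::] else (a %/ b)%N :: euclid_quots fuel' b (a %% b)
  end.

Definition qmat (q : nat) : 'M[int]_2 :=
  \matrix_(i < 2, j < 2)
    if ((i : nat) == 0%N) && ((j : nat) == 0%N) then q%:Z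
    else if ((i : nat) == 0%N) || ((j : nat) == 0%N) then 1 else 0.

(* M = (q_1 1; 1 0) ... (q_k 1; 1 0), so (a, b)^T = M (1, 0)^T *)
Definition euclid_mx (a b : nat) : 'M[int]_2 :=
  \prod_(q <- euclid_quots b a b) qmat q.

Definition idx1 : 'I_2 := @Ordinal 2 1 isT.

(* Bezout coefficients beta(a, b) = first row of M^{-1} *)
Definition beta (a b : nat) : int * int :=
  let Mi := invmx (euclid_mx a b) in (Mi ord0 ord0, Mi ord0 idx1).

Definition f1 (m n : nat) : nat * nat := (2 * m - n, m)%N.
Definition f2 (m n : nat) : nat * nat := (2 * m + n, m)%N.
Definition f3 (m n : nat) : nat * nat := (2 * n + m, n)%N.

Definition g1 (p : int * int) : int * int := (- p.2, p.1 + 2 * p.2).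
Definition g2 (p : int * int) : int * int := (p.2, p.1 - 2 * p.2).
Definition g3 (p : int * int) : int * int := (p.1, p.2 - 2 * p.1).

Definition beta_pair (p : nat * nat) : int * int := beta p.1 p.2.

(* Main.v *)
Require Import Defs.
From mathcomp Require Import all_boot all_order all_algebra zify ring.
Import GRing.Theory Num.Theory.
Local Open Scope ring_scope.

Lemma quots_fuel (f1 f2 a b : nat) : (b <= f1)%N -> (b <= f2)%N ->
  euclid_quots f1 a b = euclid_quots f2 a b.
Proof.
elim: f1 f2 a b => [|f1 IH] [|f2] a b /= h1 h2.
- by [].
- by have -> : b = 0%N by lia.
- by have -> : b = 0%N by lia.
case: eqP => // hb; congr (_ :: _); apply: IH.
  have := ltn_pmod a (d:=b); lia.
have := ltn_pmod a (d:=b); lia.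
Qed.

Lemma emx0 a : euclid_mx a 0 = 1.
Proof. by rewrite /euclid_mx /= big_nil. Qed.

Lemma emxS a b : (0 < b)%N -> euclid_mx a b = qmat (a %/ b) * euclid_mx b (a %% b).
Proof.
move=> hb; rewrite /euclid_mx; case: b hb => [//|b] _ /=.
rewrite big_cons; congr (_ * _); congr bigop; apply: quots_fuel => //.
have := ltn_pmod a (d:=b.+1); lia.
Qed.

Definition mk2 (a b c d : int) : 'M[int]_2 :=
  \matrix_(i < 2, j < 2) if (i : nat) == 0%N then (if (j : nat) == 0%N then a else b)
                          else (if (j : nat) == 0%N then c else d).

Ltac mx2 := apply/matrixP; case=> [[|[|?]] ?]; case=> [[|[|?]] ?] => //;
  rewrite !mxE /=; do 3 rewrite ?big_ord_recl ?big_ord0 /= ?mxE /=; try lia.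

Lemma qmat_unit q : qmat q \in unitmx.
Proof.
have [] // := @mulmx1_unit _ _ (qmat q) (mk2 0 1 1 (- q%:Z)).
mx2.
Qed.

Lemma emx_unit a b : euclid_mx a b \in unitmx.
Proof.
rewrite /euclid_mx; apply: (big_ind (fun A : 'M[int]_2 => A \in unitmx)).
- exact: unitmx1.
- by move=> x y hx hy; rewrite -mulmxE unitmx_mul hx hy.
by move=> q _; exact: qmat_unit.
Qed.

Lemma invmx_left (T Ti M : 'M[int]_2) : T *m Ti = 1%:M -> M \in unitmx ->
  invmx (T *m M) = invmx M *m Ti.
Proof.
move=> hT hM.
have hTM : (T *m M) \in unitmx.
  by rewrite unitmx_mul hM andbT; case: (mulmx1_unit hT).
have e : (T *m M) *m (invmx M *m Ti) = 1%:M.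
  by rewrite mulmxA -(mulmxA T) mulmxV // mulmx1 hT.
by rewrite -[LHS]mulmx1 -e mulmxA mulVmx // mul1mx.
Qed.

Lemma beta_T (T Ti : 'M[int]_2) a b c d a' b' c' d' :
  T *m Ti = 1%:M -> Ti = mk2 a b c d -> T *m euclid_mx a' b' = euclid_mx c' d' ->
  beta c' d' = let: (r, s) := beta a' b' in (r * a + s * c, r * b + s * d).
Proof.
move=> hT eTi eM; rewrite /beta -eM (invmx_left _ _ _ hT (emx_unit a' b')) eTi.
rewrite !mxE !big_ord_recl !big_ord0 !mxE /= !addr0.
by have -> : lift ord0 ord0 = idx1 :> 'I_2 by apply: val_inj.
Qed.

Lemma divmod_eq a b q r : (r < b)%N -> a = (q * b + r)%N -> (a %/ b = q /\ a %% b = r)%N.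
Proof.
move=> hr ->; have hb : (0 < b)%N by lia.
by rewrite divnMDl // divn_small // modnMDl modn_small // addn0.
Qed.

Lemma emxE a b q r : (r < b)%N -> a = (q * b + r)%N -> euclid_mx a b = qmat q * euclid_mx b r.
Proof.
move=> hr ha; have [e1 e2] := divmod_eq _ _ _ _ hr ha.
by rewrite emxS ?e1 ?e2 //; lia.
Qed.

Lemma Tm (T A : 'M[int]_2) : T *m A = T * A.
Proof. by []. Qed.

Lemma idf2 : qmat 2 = mk2 2 1 1 0. Proof. mx2. Qed.
Lemma idf3 q : qmat (2 + q) = mk2 1 2 0 1 * qmat q. Proof. mx2. Qed.
Lemma idf1a p : qmat 1 * (qmat 1 * qmat p) = mk2 2 (-1) 1 0 * qmat p.+1. Proof. mx2. Qed.
Lemma idf1b p : qmat 1 * qmat p.+1 = mk2 2 (-1) 1 0 * (qmat 1 * qmat p). Proof. mx2. Qed.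

Theorem theorem1p5 (m n : nat) :
  (0 < n)%N -> (n < m)%N -> coprime m n ->
  [/\ (m, n) <> (2%N, 1%N) -> beta_pair (f1 m n) = g1 (beta m n),
      beta_pair (f2 m n) = g2 (beta m n)
    & beta_pair (f3 m n) = g3 (beta m n)].
Proof.
move=> hn hnm hco.
have hm := divn_eq m n; have hr : (m %% n < n)%N by rewrite ltn_mod.
set q := (m %/ n)%N in hm; set r := (m %% n)%N in hm hr.
have Em : euclid_mx m n = qmat q * euclid_mx n r by apply: emxE.
split.
- move=> hne; rewrite /beta_pair /f1 /=.
  rewrite (beta_T (mk2 2 (-1) 1 0) (mk2 0 1 (-1) 2) 0 1 (-1) 2 m n (2 * m - n) m).
  + by case: (beta m n) => a b /=; congr pair; ring.
  + by mx2.
  + by [].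
  rewrite Tm.
  have [q0|[q1|q2]] : (q = 0 \/ q = 1 \/ 2 <= q)%N by lia.
  + rewrite q0 in hm; lia.
  +
    rewrite q1 in hm Em.
    have hr0 : (0 < r)%N by lia.
    have hn2 := divn_eq n r; have hr2 : (n %% r < r)%N by rewrite ltn_mod.
    set q' := (n %/ r)%N in hn2; set r' := (n %% r)%N in hn2 hr2.
    rewrite (emxE (2 * m - n) m 1 r); [|lia|lia].
    rewrite (emxE m r q'.+1 r'); [|lia|lia].
    rewrite Em (emxE n r q' r') //.
    by rewrite !mulrA idf1b mulrA.
  + have hm2 : m <> (2 * n)%N.
      move=> e; move: hco; rewrite e => /eqP.
      rewrite /coprime gcdnC gcdnMl => e1.
      by apply: hne; rewrite e e1.
    have hgt : (2 * n < m)%N by nia.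
    case: q hm Em q2 => [//|p] hm Em _.
    rewrite (emxE (2 * m - n) m 1 (m - n)); [|lia|lia].
    rewrite (emxE m (m - n) 1 n); [|lia|lia].
    rewrite (emxE (m - n) n p r); [|lia|lia].
    by rewrite Em !mulrA -idf1a !mulrA.
- rewrite /beta_pair /f2 /=.
  rewrite (beta_T (mk2 2 1 1 0) (mk2 0 1 1 (-2)) 0 1 1 (-2) m n (2 * m + n) m).
  + by case: (beta m n) => a b /=; congr pair; ring.
  + by mx2.
  + by [].
  by rewrite Tm -idf2 (emxE (2 * m + n) m 2 n) //; lia.
- rewrite /beta_pair /f3 /=.
  rewrite (beta_T (mk2 1 2 0 1) (mk2 1 (-2) 0 1) 1 (-2) 0 1 m n (2 * n + m) n).
  + by case: (beta m n) => a b /=; congr pair; ring.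
  + by mx2.
  + by [].
  by rewrite Tm Em mulrA -idf3 (emxE (2 * n + m) n (2 + q) r) //; lia.
Qed.
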